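(* Let $f:\mathbb{R}^n\to\mathbb{R}$ ($n\ge 1$) be a multivariate polynomial of degree at most $4$, and let $\mu_f:\mathbb{R}^n\times(0,\infty)\to\mathbb{R}$ be its Steklov function, \[ \mu_f(x,t) := \frac{1}{(2t)^n}\int_{x_n-t}^{x_n+t}\cdots\int_{x_1-t}^{x_1+t} f(\tau_1,\ldots,\tau_n)\,d\tau_1\cdots d\tau_n,\qquad x=(x_1,\ldots,x_n). \] Then for all $x\in\mathbb{R}^n$ and $t>0$, \[ \mu_f(x,t) = f(x) + \frac{t^2}{6}\sum_{i=1}^n f_{ii}(x) + \left(\frac{1}{120}\sum_{i=1}^n f_{iiii} + \frac{1}{36}\sum_{\substack{i,j=1\\ j>i}}^n f_{iijj}\right)t^4, \] where $f_{ii}:=\partial^2 f/\partial x_i^2$, $f_{iiii}:=\partial^4 f/\partial x_i^4$ and $f_{iijj}:=\partial^4 f/\partial x_i^2\partial x_j^2$ (the fourth-order derivatives being constants). *)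

(* Defs.v *)
From Stdlib Require Import Reals.
From Coquelicot Require Import Coquelicot.
From HB Require Import structures.
From mathcomp Require Import all_boot all_algebra.
From mathcomp Require Import Rstruct.
From mathcomp.multinomials Require Import mpoly.

Set Implicit Arguments. Unset Strict Implicit. Unset Printing Implicit Defensive.
Import GRing.Theory.
Local Open Scope R_scope.

Definition upd (y : nat -> R) (k : nat) (s : R) : nat -> R :=
  fun i => if (i == k)%N then s else y i.

(* iter_int k F x t y = int_{x_{k-1}-t}^{x_{k-1}+t} ... int_{x_0-t}^{x_0+t}
   F(tau_0,...,tau_{k-1}, y_k, y_{k+1}, ...) dtau_0 ... dtau_{k-1}
   (innermost integral over coordinate 0, outermost over coordinate k-1). *)
Fixpoint iter_int (k : nat) (F : (nat -> R) -> R) (x : nat -> R) (t : R)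
  (y : nat -> R) : R :=
  match k with
  | O => F y
  | S k' => RInt (fun s => iter_int k' F x t (upd y k' s)) (x k' - t) (x k' + t)
  end.

Definition steklov (n : nat) (f : {mpoly R[n]}) (x : 'I_n -> R) (t : R) : R :=
  / (2 * t) ^ n *
  iter_int n (fun y => f.@[fun i : 'I_n => y (nat_of_ord i)])
    (fun k => match insub k with Some i => x i | None => 0 end) t
    (fun _ => 0).

(* Main.v *)
Require Import Defs.
From Stdlib Require Import Reals.
From Coquelicot Require Import Coquelicot.
From HB Require Import structures.
From mathcomp Require Import all_boot all_algebra.
From mathcomp Require Import Rstruct.
From mathcomp.multinomials Require Import mpoly.
From mathcomp Require Import ring lra.
From Stdlib Require Import FunctionalExtensionality.
Import GRing.Theory Num.Theory.
Ltac to_mc := rewrite ?RplusE ?RminusE ?RmultE ?RdivE ?RoppE ?RinvE ?RpowE ?INRE ?R0E ?R1E.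
Section An.
Local Open Scope R_scope.
Lemma is_RInt_val (f : R -> R) a b l l' : is_RInt f a b l -> l = l' -> is_RInt f a b l'.
Proof. by move=> H <-. Qed.
Lemma der_pow (K x : R) (d : nat) :
  is_derive (fun s => K / INR (S d) * s ^ S d) x (K * x ^ d).
Proof.
have H := is_derive_scal _ x (K / INR (S d)) _ (is_derive_pow id (S d) x _ (is_derive_id x)).
have E : K * x ^ d = K / INR (S d) * (INR (S d) * 1 * x ^ d).
  to_mc. field. by rewrite addrC natr1 pnatr_eq0.
rewrite E. exact: H.
Qed.

Lemma int_pow (K a b : R) (d : nat) :
  is_RInt (fun s => K * s ^ d) a b (K * (b ^ S d - a ^ S d) / INR (S d)).
Proof.
have E : K / INR (S d) * b ^ S d - K / INR (S d) * a ^ S d = K * (b ^ S d - a ^ S d) / INR (S d).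
  to_mc. field. by rewrite addrC natr1 pnatr_eq0.
rewrite -E.
apply: (is_RInt_derive (fun s => K / INR (S d) * s ^ S d) (fun s => K * s ^ d)).
- move=> x _. exact: der_pow.
- move=> x _. apply: ex_derive_continuous. eexists. exact: (is_derive_scal _ x K _ (is_derive_pow id d x _ (is_derive_id x))).
Qed.
End An.
Local Open Scope ring_scope.

Lemma int_pow4 (K a t : R) d : (d <= 4)%N ->
  is_RInt (fun s => K * s ^+ d) (a - t) (a + t)
   (2 * t * (K * a ^+ d + t ^+ 2 / 6 * ((d ^_ 2)%:R * (K * a ^+ (d - 2)))
      + t ^+ 4 / 120 * ((d ^_ 4)%:R * (K * a ^+ (d - 4))))).
Proof.
move=> hd.
have H := int_pow K (a - t) (a + t) d.
have H2 := is_RInt_ext _ (fun s => K * s ^+ d) _ _ _ (fun x _ => congr1 (Rmult K) (RpowE x d)) H.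
move: H2; to_mc => H2.
eapply is_RInt_val; first exact: H2.
case: d hd {H H2} => [|[|[|[|[|//]]]]] _ /=.
all: rewrite ?ffactnS ?ffactn0 /=; rewrite ?mul0r ?mulr0 ?add0r ?addr0.
all: by field.
Qed.

Definition zupd n (z : 'I_n -> R) (i : 'I_n) (s : R) : 'I_n -> R :=
  fun j => if j == i then s else z j.
Arguments zupd {n}.

Lemma D2E n (p : {mpoly R[n]}) i : p^`M(i)^`M(i) = p^`M(i, 2).
Proof. by rewrite !mderivnS mderivn0. Qed.
Lemma D4E n (p : {mpoly R[n]}) i : p^`M(i)^`M(i)^`M(i)^`M(i) = p^`M(i, 4).
Proof. by rewrite !mderivnS mderivn0. Qed.

Lemma evalX_split n (m : 'X_{1..n}) (z : 'I_n -> R) i :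
  ('X_[m] : {mpoly R[n]}).@[z] = (\prod_(j < n | j != i) z j ^+ m j) * z i ^+ m i.
Proof. by rewrite mevalX (bigD1 i) //= mulrC. Qed.

Lemma intX n (m : 'X_{1..n}) (z : 'I_n -> R) (i : 'I_n) (t : R) : (m i <= 4)%N ->
  is_RInt (fun s => ('X_[m] : {mpoly R[n]}).@[zupd z i s]) (z i - t) (z i + t)
   (2 * t * (('X_[m] : {mpoly R[n]}).@[z] + t ^+ 2 / 6 * ('X_[m]^`M(i)^`M(i)).@[z]
     + t ^+ 4 / 120 * ('X_[m]^`M(i)^`M(i)^`M(i)^`M(i)).@[z])).
Proof.
move=> hm.
set K := \prod_(j < n | j != i) z j ^+ m j.
have E : forall k, (('X_[m] : {mpoly R[n]}) ^`M(i,k)).@[z] = (m i ^_ k)%:R * (K * z i ^+ (m i - k)).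
  move=> k; rewrite mderivnX mevalZ (evalX_split _ _ _ i); congr (_ * (_ * _)).
  - apply: eq_bigr => j hj; by rewrite mnmBE mulmnE mnm1E eq_sym (negbTE hj) mul0n subn0.
  - by rewrite mnmBE mulmnE mnm1E eqxx mul1n.
rewrite D4E D2E !E.
have E0 := E 0%N. rewrite mderivn0 ffactn0 subn0 mul1r in E0. rewrite E0.
apply: (is_RInt_ext (fun s => K * s ^+ m i)); last exact: int_pow4.
move=> s _. rewrite (evalX_split _ _ _ i) /zupd eqxx; congr (_ * _).
apply: eq_bigr => j hj; by rewrite (negbTE hj).
Qed.

Definition E1 n (t : R) (i : 'I_n) (p : {mpoly R[n]}) :=
  p + (t ^+ 2 / 6) *: p^`M(i)^`M(i) + (t ^+ 4 / 120) *: p^`M(i)^`M(i)^`M(i)^`M(i).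
Arguments E1 {n}.

Lemma intP n (p : {mpoly R[n]}) (z : 'I_n -> R) (i : 'I_n) (t : R) :
  (forall m, m \in msupp p -> (m i <= 4)%N) ->
  is_RInt (fun s => p.@[zupd z i s]) (z i - t) (z i + t) (2 * t * (E1 t i p).@[z]).
Proof.
move=> hp.
suff H : forall (s : seq 'X_{1..n}) (c : 'X_{1..n} -> R), (forall m, m \in s -> (m i <= 4)%N) ->
  let q := \sum_(m <- s) c m *: ('X_[m] : {mpoly R[n]}) in
  is_RInt (fun s => q.@[zupd z i s]) (z i - t) (z i + t) (2 * t * (E1 t i q).@[z]).
  by rewrite [p]mpolyE; apply: H.
elim=> [|m s IH] c hs q.
- rewrite /q big_nil.
  have H0 := is_RInt_const (z i - t) (z i + t) (0 : R).
  have H1 : is_RInt (fun s => (0 : {mpoly R[n]}).@[zupd z i s]) (z i - t) (z i + t)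
     (scal (z i + t - (z i - t)) (0 : R)).
    apply: (is_RInt_ext _ _ _ _ _ _ H0) => x _. by rewrite meval0.
  eapply is_RInt_val; first exact: H1.
  rewrite /E1 !mderiv0 !scaler0 !addr0 meval0 mulr0 /scal /= /mult /=.
  by rewrite RmultE mulr0.
- 
  have H1 := intX _ m z i t (hs m (mem_head _ _)).
  have H2 := IH c (fun m' hm' => hs m' ltac:(by rewrite inE hm' orbT)).
  have H3 := is_RInt_plus _ _ _ _ _ _ (is_RInt_scal _ _ _ (c m) _ H1) H2.
  eapply is_RInt_val.
    apply: (is_RInt_ext _ _ _ _ _ _ H3) => x _.
    by rewrite /q big_cons mevalD mevalZ.
  rewrite /E1 /scal /plus /= /mult /=.
  rewrite /q big_cons !mderivD !mderivZ !mevalD !mevalZ. rewrite !raddfD /= !mevalZ. to_mc. ring.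
Qed.

Definition low n k (p : {mpoly R[n]}) := forall m : 'X_{1..n}, (k < mdeg m)%N -> p@_m = 0.
Arguments low {n}.

Lemma low_deriv n k (p : {mpoly R[n]}) i : low k.+1 p -> low k (p^`M(i)).
Proof.
move=> h m hm; rewrite mcoeff_mderiv h ?mul0rn //.
by rewrite mdegD mdeg1 addn1 ltnS.
Qed.

Lemma low_S n k (p : {mpoly R[n]}) : low k p -> low k.+1 p.
Proof. by move=> h m hm; apply: h; apply: ltnW. Qed.

Lemma low0_deriv n (p : {mpoly R[n]}) i : low 0 p -> p^`M(i) = 0.
Proof.
move=> h; apply/mpolyP => m; rewrite mcoeff_mderiv mcoeff0 h ?mul0rn //.
by rewrite mdegD mdeg1 addn1.
Qed.

Lemma V5 n (p : {mpoly R[n]}) a b c d e : low 4 p ->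
  p^`M(a)^`M(b)^`M(c)^`M(d)^`M(e) = 0.
Proof.
move=> h; apply: low0_deriv; do 4! apply: low_deriv; exact: h.
Qed.

Lemma low_deriv' n k (p : {mpoly R[n]}) i : low k p -> low k (p^`M(i)).
Proof. by move=> h; apply: low_deriv; apply: low_S. Qed.

Lemma low_add n k (p q : {mpoly R[n]}) : low k p -> low k q -> low k (p + q).
Proof. by move=> hp hq m hm; rewrite mcoeffD hp ?hq ?addr0. Qed.

Lemma low_scale n k (p : {mpoly R[n]}) c : low k p -> low k (c *: p).
Proof. by move=> hp m hm; rewrite mcoeffZ hp ?mulr0. Qed.

Lemma low0 n k : low k (0 : {mpoly R[n]}).
Proof. by move=> m _; rewrite mcoeff0. Qed.

Lemma low_sum n k (I : Type) (r : seq I) (P : pred I) (F : I -> {mpoly R[n]}) :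
  (forall i, low k (F i)) -> low k (\sum_(i <- r | P i) F i).
Proof.
move=> h; apply: (big_ind (low k)) => //; [exact: low0 | exact: low_add].
Qed.

Lemma low_exp n (p : {mpoly R[n]}) m i : low 4 p -> m \in msupp p -> (m i <= 4)%N.
Proof.
move=> h hm; rewrite leqNgt; apply/negP => hi.
have : (4 < mdeg m)%N.
  apply: (leq_trans hi); by rewrite mdegE (bigD1 i) //= leq_addr.
move/h/eqP; by rewrite mcoeff_eq0 hm.
Qed.

Lemma msize_low n (p : {mpoly R[n]}) : (msize p <= 5)%N -> low 4 p.
Proof.
move=> h m hm; apply/eqP; rewrite mcoeff_eq0; apply: msize_mdeg_ge.
exact: leq_trans h hm.
Qed.

Lemma big_split_k n (P : pred 'I_n) (F : 'I_n -> {mpoly R[n]}) k (hk : (k < n)%N) :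
  \sum_(i < n | P i && (i < k.+1)%N) F i =
  \sum_(i < n | P i && (i < k)%N) F i + (if P (Ordinal hk) then F (Ordinal hk) else 0).
Proof.
case hP: (P (Ordinal hk)).
- rewrite (bigD1 (Ordinal hk)) /= ?hP ?ltnSn // addrC; congr (_ + _).
  apply: eq_bigl => i; rewrite ltnS leq_eqVlt -val_eqE /=.
  by case: (P i) => //=; case: (ltngtP i k).
- rewrite addr0; apply: eq_bigl => i; rewrite ltnS leq_eqVlt.
  case E: (nat_of_ord i == k) => //=.
  have -> : i = Ordinal hk by apply: val_inj; apply/eqP.
  by rewrite hP.
Qed.

Lemma big_split_k0 n (F : 'I_n -> {mpoly R[n]}) k (hk : (k < n)%N) :
  \sum_(i < n | (i < k.+1)%N) F i =
  \sum_(i < n | (i < k)%N) F i + F (Ordinal hk).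
Proof.
have := @big_split_k n xpredT F k hk; rewrite /=.
by [].
Qed.

Lemma mderiv_sum n (I : Type) (r : seq I) (P : pred I) (F : I -> {mpoly R[n]}) j :
  (\sum_(i <- r | P i) F i)^`M(j) = \sum_(i <- r | P i) (F i)^`M(j).
Proof. exact: raddf_sum. Qed.

Lemma D2sum n (I : Type) (r : seq I) (P : pred I) (F : I -> {mpoly R[n]}) j :
  (\sum_(i <- r | P i) F i)^`M(j)^`M(j) = \sum_(i <- r | P i) (F i)^`M(j)^`M(j).
Proof. by rewrite (@mderiv_sum n I r P F j) mderiv_sum. Qed.

Lemma D4sum n (I : Type) (r : seq I) (P : pred I) (F : I -> {mpoly R[n]}) j :
  (\sum_(i <- r | P i) F i)^`M(j)^`M(j)^`M(j)^`M(j) = \sum_(i <- r | P i) (F i)^`M(j)^`M(j)^`M(j)^`M(j).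
Proof. by rewrite (@D2sum n I r P F j) D2sum. Qed.

Section Main.
Variables (n : nat) (f : {mpoly R[n]}) (t : R).
Hypothesis hf : low 4 f.

Definition S1 k := \sum_(i < n | (i < k)%N) f^`M(i)^`M(i).
Definition S4 k := \sum_(i < n | (i < k)%N) f^`M(i)^`M(i)^`M(i)^`M(i).
Definition S22 k := \sum_(i < n) \sum_(j < n | (i < j)%N && (j < k)%N) f^`M(i)^`M(i)^`M(j)^`M(j).
Definition G k := f + (t ^+ 2 / 6) *: S1 k + t ^+ 4 *: ((1/120) *: S4 k + (1/36) *: S22 k).

Lemma stepE k (hk : (k < n)%N) (Z : 'I_n -> R) :
  (E1 t (Ordinal hk) (G k)).@[Z] = (G k.+1).@[Z].
Proof.
set o := Ordinal hk.
have d2S1 : (S1 k)^`M(o)^`M(o) = \sum_(i < n | (i < k)%N) f^`M(i)^`M(i)^`M(o)^`M(o).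
  by rewrite /S1 D2sum.
have d2S4 : (S4 k)^`M(o)^`M(o) = 0.
  by rewrite /S4 D2sum ; apply: big1 => i _; rewrite (@V5 n f i i i i o) ?mderiv0.
have d2S22 : (S22 k)^`M(o)^`M(o) = 0.
  rewrite /S22 D2sum ; apply: big1 => i _; rewrite D2sum ; apply: big1 => j _.
  by rewrite (@V5 n f i i j j o) ?mderiv0.
have d4S1 : (S1 k)^`M(o)^`M(o)^`M(o)^`M(o) = 0.
  by rewrite /S1 D4sum ; apply: big1 => i _; rewrite (@V5 n f i i o o o) ?mderiv0.
have d4S4 : (S4 k)^`M(o)^`M(o)^`M(o)^`M(o) = 0.
  by rewrite /S4 D4sum ; apply: big1 => i _; rewrite (@V5 n f i i i i o) ?mderiv0.
have d4S22 : (S22 k)^`M(o)^`M(o)^`M(o)^`M(o) = 0.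
  rewrite /S22 D4sum ; apply: big1 => i _; rewrite D4sum ; apply: big1 => j _.
  by rewrite (@V5 n f i i j j o) ?mderiv0.
have e1 : S1 k.+1 = S1 k + f^`M(o)^`M(o) by rewrite /S1 big_split_k0.
have e4 : S4 k.+1 = S4 k + f^`M(o)^`M(o)^`M(o)^`M(o) by rewrite /S4 big_split_k0.
have e22 : S22 k.+1 = S22 k + \sum_(i < n | (i < k)%N) f^`M(i)^`M(i)^`M(o)^`M(o).
  rewrite /S22 (eq_bigr (fun i : 'I_n => \sum_(j < n | (i < j)%N && (j < k)%N) f^`M(i)^`M(i)^`M(j)^`M(j)
        + (if (i < k)%N then f^`M(i)^`M(i)^`M(o)^`M(o) else 0))); last first.
    by move=> i _; rewrite (@big_split_k n (fun j => (i < j)%N)).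
  by rewrite big_split /= -big_mkcond.
rewrite /E1 /G !mderivD !mderivZ !raddfD /= !mderivZ.
rewrite d4S1 d4S4 d4S22 d2S1 d2S4 d2S22 e1 e4 e22.
rewrite !scaler0 !raddfD /= !mevalZ ?meval0.
by field.
Qed.

Lemma lowG k : low 4 (G k).
Proof.
rewrite /G /S1 /S4 /S22.
by repeat first [exact: hf | apply: low_deriv' | apply: low_add | apply: low_scale | apply: low_sum => ?].
Qed.

Definition zk (x : 'I_n -> R) k (y : nat -> R) : 'I_n -> R :=
  fun i => if (i < k)%N then x i else y (nat_of_ord i).

Lemma iterE (x : 'I_n -> R) (x' : nat -> R) (hx : forall i : 'I_n, x' i = x i) k :
  (k <= n)%N -> forall y,
  iter_int k (fun y => f.@[fun i : 'I_n => y (nat_of_ord i)]) x' t y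
  = (2 * t) ^+ k * (G k).@[zk x k y].
Proof.
elim: k => [|k IH] hk y.
- have z1 : S1 0 = 0 by apply: big_pred0 => i; rewrite ltn0.
  have z4 : S4 0 = 0 by apply: big_pred0 => i; rewrite ltn0.
  have z22 : S22 0 = 0 by apply: big1 => i _; apply: big_pred0 => j; rewrite ltn0 andbF.
  rewrite /= expr0 mul1r /G z1 z4 z22.
  rewrite !scaler0 !addr0 ?scaler0 ?addr0.
  by apply: meval_eq => i; rewrite /zk ltn0.
- have hk' : (k < n)%N := hk.
  set o := Ordinal hk'.
  set Z := zk x k.+1 y.
  rewrite /=.
  have -> : (fun s => iter_int k (fun y => f.@[fun i : 'I_n => y (nat_of_ord i)]) x' t (upd y k s))
      = (fun s => (2 * t) ^+ k * (G k).@[zupd Z o s]).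
    apply: functional_extensionality => s; rewrite (IH (ltnW hk)); congr (_ * _).
    apply: meval_eq => i; rewrite /Z /zk /zupd /upd.
    have -> : (i == o) = (nat_of_ord i == k) by rewrite -val_eqE.
    by rewrite ltnS; case: ltngtP.
  have hZ : Z o = x o by rewrite /Z /zk /= ltnSn.
  have H := @intP n (G k) Z o t (fun m hm => @low_exp n (G k) m o (lowG k) hm).
  rewrite hZ in H.
  have e : x' k = x o := hx o.
  rewrite e.
  have Hs := is_RInt_scal _ _ _ ((2 * t) ^+ k) _ H.
  rewrite (is_RInt_unique _ _ _ _ Hs).
  rewrite /scal /= /mult /= stepE exprS. to_mc. ring.
Qed.
End Main.

Lemma meval_sum n (I : Type) (r : seq I) (P : pred I) (F : I -> {mpoly R[n]}) (v : 'I_n -> R) :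
  (\sum_(i <- r | P i) F i).@[v] = \sum_(i <- r | P i) (F i).@[v].
Proof. exact: raddf_sum. Qed.

Lemma meval_dsum n (P : 'I_n -> pred 'I_n) (F : 'I_n -> 'I_n -> {mpoly R[n]}) (v : 'I_n -> R) :
  (\sum_(i < n) \sum_(j < n | P i j) F i j).@[v] = \sum_(i < n) \sum_(j < n | P i j) (F i j).@[v].
Proof. rewrite meval_sum; apply: eq_bigr => i _; exact: meval_sum. Qed.

Theorem theorem1 (n : nat) (hn : (0 < n)%N) (f : {mpoly R[n]})
  (hdeg : (msize f <= 5)%N) (x : 'I_n -> R) (t : R) (ht : 0 < t) :
  steklov f x t =
    f.@[x]
    + t ^+ 2 / 6 * (\sum_(i < n) (f^`M(i)^`M(i)).@[x])
    + (1 / 120 * (\sum_(i < n) (f^`M(i)^`M(i)^`M(i)^`M(i)).@[x])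
       + 1 / 36 * (\sum_(i < n) \sum_(j < n | (i < j)%N)
                     (f^`M(i)^`M(i)^`M(j)^`M(j)).@[x])) * t ^+ 4.
Proof.
have hf := @msize_low n f hdeg.
rewrite /steklov.
have hx' : forall i : 'I_n, (fun k => match insub k with Some i => x i | None => 0 end) (nat_of_ord i) = x i.
  by move=> i /=; rewrite valK.
rewrite (@iterE n f t hf x _ hx' n (leqnn n)).
have hzk : zk n x n (fun=> 0) =1 x by move=> i; rewrite /zk ltn_ord.
rewrite (meval_eq _ hzk).
rewrite RinvE RpowE RmultE IZRposE INRE /=.
rewrite mulKf; last by rewrite expf_neq0 // mulf_neq0 ?lt0r_neq0.
have eS1 : S1 n f n = \sum_(i < n) f^`M(i)^`M(i) by apply: eq_bigl => i; rewrite ltn_ord.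
have eS4 : S4 n f n = \sum_(i < n) f^`M(i)^`M(i)^`M(i)^`M(i) by apply: eq_bigl => i; rewrite ltn_ord.
have eS22 : S22 n f n = \sum_(i < n) \sum_(j < n | (i < j)%N) f^`M(i)^`M(i)^`M(j)^`M(j).
  by apply: eq_bigr => i _; apply: eq_bigl => j; rewrite ltn_ord andbT.
rewrite /G eS1 eS4 eS22.
rewrite !raddfD /= !mevalZ.
rewrite (@meval_dsum n (fun i j => (i < j)%N) (fun i j => f^`M(i)^`M(i)^`M(j)^`M(j)) x).
rewrite (@meval_sum n _ _ xpredT (fun i : 'I_n => f^`M(i)^`M(i)^`M(i)^`M(i)) x).
rewrite (@meval_sum n _ _ xpredT (fun i : 'I_n => f^`M(i)^`M(i)) x).
ring.
Qed.
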